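(* Fix integers $n\ge 1$ and a real number $p\ge 1$. For $\mathbf{c}\in\mathbb{R}^n$ and $r>0$ let $\mathrm{ball}(\mathbf{c},r)=\{\mathbf{x}\in\mathbb{R}^n:\|\mathbf{x}-\mathbf{c}\|\le r\}$, and let $\mathcal{B}^n$ be the set of all such balls, equipped with the depth dissimilarity $$d_{\mathrm{dep}}(\mathrm{ball}(\mathbf{c}_1,r_1),\mathrm{ball}(\mathbf{c}_2,r_2))=\frac{\|\mathbf{c}_1-\mathbf{c}_2\|_p^p+|r_1-r_2|^p}{r_1\, r_2}.$$ Then: (1) For any $B_1,B_2\in\mathcal{B}^n$ and any $\Delta>0$ there exists $r_0>0$ such that for every ball $\mathrm{ball}(\mathbf{c}',r')\subseteq B_2$ with $r'\le r_0$, $$d_{\mathrm{dep}}(B_1,\mathrm{ball}(\mathbf{c}',r'))>d_{\mathrm{dep}}(B_1,B_2)+\Delta.$$ (2) For any $B\in\mathcal{B}^n$, any positive integer $N$ and any $M>0$, there exist balls $B_1,\dots,B_N\in\mathcal{B}^n$ with $B_i\subseteq B$ for all $i$, such that $d_{\mathrm{dep}}(B_i,B_j)>M$ for all distinct $i,j\in\{1,\dots,N\}$. The same conclusions hold for boxes: for $\mathbf{c}\in\mathbb{R}^n$ and $\mathbf{o}\in(\mathbb{R}_{>0})^n$ let $\mathrm{box}(\mathbf{c},\mathbf{o})=\{\mathbf{x}\in\mathbb{R}^n:\mathbf{c}-\mathbf{o}\le\mathbf{x}\le\mathbf{c}+\mathbf{o}\}$ (componentwise inequalities), with depth dissimilarity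 $$d_{\mathrm{dep}}(\mathrm{box}(\mathbf{c}_1,\mathbf{o}_1),\mathrm{box}(\mathbf{c}_2,\mathbf{o}_2))=\frac{\|\mathbf{c}_1-\mathbf{c}_2\|_p^p+\|\mathbf{o}_1-\mathbf{o}_2\|_p^p}{\|\mathbf{o}_1\|\,\|\mathbf{o}_2\|};$$ then (1) holds with ''there exists $r_0>0$'' replaced by ''there exists $\mathbf{o}_0\in(\mathbb{R}_{>0})^n$'' and the condition $r'\le r_0$ replaced by $\mathbf{o}'\le\mathbf{o}_0$ componentwise for boxes $\mathrm{box}(\mathbf{c}',\mathbf{o}')\subseteq B_2$, and (2) holds with balls replaced by boxes throughout.
   Context: $\|\cdot\|_p$ denotes the $p$-norm, $\|\mathbf{x}\|_p=(\sum_i|x_i|^p)^{1/p}$; $\|\cdot\|$ without subscript denotes the Euclidean norm. *)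

(* Defs.v *)
From HB Require Import structures.
From mathcomp Require Import all_boot all_order all_algebra.
From mathcomp Require Import all_classical all_reals all_analysis.
Set Implicit Arguments. Unset Strict Implicit. Unset Printing Implicit Defensive.
Import Order.TTheory GRing.Theory Num.Theory.
Local Open Scope ring_scope.
Local Open Scope classical_set_scope.

Section Defs.
Variables (R : realType) (n : nat).
Notation vec := 'rV[R]_n.

Definition enorm (x : vec) : R := Num.sqrt (\sum_(i < n) x ord0 i ^+ 2).

Definition pnorm (p : R) (x : vec) : R :=
  powR (\sum_(i < n) powR `|x ord0 i| p) p^-1.

Definition eball (c : vec) (r : R) : set vec := [set x | enorm (x - c) <= r].

Definition box (c o : vec) : set vec :=
  [set x | forall i : 'I_n, c ord0 i - o ord0 i <= x ord0 i <= c ord0 i + o ord0 i].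

Definition posvec (o : vec) : Prop := forall i : 'I_n, 0 < o ord0 i.

Definition vle (o o' : vec) : Prop := forall i : 'I_n, o ord0 i <= o' ord0 i.

Definition ddep_ball (p : R) (c1 : vec) (r1 : R) (c2 : vec) (r2 : R) : R :=
  (powR (pnorm p (c1 - c2)) p + powR `|r1 - r2| p) / (r1 * r2).

Definition ddep_box (p : R) (c1 o1 c2 o2 : vec) : R :=
  (powR (pnorm p (c1 - c2)) p + powR (pnorm p (o1 - o2)) p)
    / (enorm o1 * enorm o2).

End Defs.

(* Main.v *)
Require Import Defs.
From HB Require Import structures.
From mathcomp Require Import all_boot all_order all_algebra.
From mathcomp Require Import all_classical all_reals all_analysis.
From mathcomp Require Import ring lra.
Import Order.TTheory GRing.Theory Num.Theory.
Local Open Scope ring_scope.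
Local Open Scope classical_set_scope.

Section H.
Variable R : realType.

Lemma pnormE n (p : R) (v : 'rV[R]_n) : 1 <= p ->
  powR (pnorm p v) p = \sum_(k < n) powR `|v ord0 k| p.
Proof.
move=> hp; rewrite /pnorm -powRrM mulVf ?powRr1 //.
  by apply: sumr_ge0 => i _; exact: powR_ge0.
by apply: lt0r_neq0; lra.
Qed.

Lemma enormZ n (s : R) (v : 'rV[R]_n) : enorm (s *: v) = `|s| * enorm v.
Proof.
rewrite /enorm; under eq_bigr do rewrite mxE exprMn.
by rewrite -mulr_sumr sqrtrM ?sqr_ge0 // sqrtr_sqr.
Qed.

Lemma enorm_gt0 n (v : 'rV[R]_n) (i0 : 'I_n) : posvec v -> 0 < enorm v.
Proof.
move=> hv; rewrite /enorm sqrtr_gt0 (bigD1 i0) //=.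
have := hv i0 => h.
have : 0 <= \sum_(i < n | i != i0) v ord0 i ^+ 2 by apply: sumr_ge0 => i _; exact: sqr_ge0.
have : 0 < v ord0 i0 ^+ 2 by apply: exprn_gt0.
lra.
Qed.

Lemma pnorm0 n (p : R) (c : 'rV[R]_n) : 1 <= p -> powR (pnorm p (c - c)) p = 0.
Proof.
move=> hp; rewrite pnormE // big1 // => i _.
by rewrite subrr mxE normr0 powR0 //; apply: lt0r_neq0; lra.
Qed.

Lemma radii (p M r : R) : 1 <= p -> 0 < M -> 0 < r ->
  exists rs : nat -> R, (forall k, 0 < rs k <= r) /\
    (forall i j : nat, i != j -> M * (rs i * rs j) < powR `|rs i - rs j| p).
Proof.
move=> hp hM hr.
pose f (x : R) := Num.min (x / 2) (powR (x / 2) p / ((M + 1) * x)).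
have fpos x : 0 < x -> 0 < f x.
  move=> hx; rewrite /f lt_min; apply/andP; split; first lra.
  by apply: divr_gt0; [apply: powR_gt0; lra | apply: mulr_gt0 => //; lra].
have fle1 x : f x <= x / 2 by rewrite /f ge_min lexx.
have fle2 x : f x <= powR (x / 2) p / ((M + 1) * x) by rewrite /f ge_min lexx orbT.
pose rs k := iter k f r.
have rpos k : 0 < rs k by elim: k => [|k IH] //=; exact: fpos.
have rdec k : rs k.+1 <= rs k by have := fle1 (rs k); have := rpos k; rewrite /= /rs; lra.
have rmono i j : (i <= j)%N -> rs j <= rs i.
  move=> /subnK <-; elim: (j - i)%N => [|k IH]; first by rewrite add0n.
  rewrite addSn.
  exact: le_trans (rdec _) IH.
have key i j : (i < j)%N -> M * (rs i * rs j) < powR `|rs i - rs j| p.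
  move=> hij.
  have h1 : rs j <= f (rs i) by exact: (rmono i.+1 j hij).
  have h2 := fle1 (rs i); have h3 := fle2 (rs i); have hi := rpos i; have hj := rpos j.
  have ha : 0 < powR (rs i / 2) p by apply: powR_gt0; lra.
  have hb : powR (rs i / 2) p <= powR `|rs i - rs j| p.
    have hn : rs i / 2 <= `|rs i - rs j| by rewrite ger0_norm; lra.
    apply: ge0_ler_powR => //; [lra | rewrite nnegrE; lra].
  have hc : M * (rs i * rs j) <= M * (rs i * f (rs i)).
    by apply: ler_wpM2l; [lra| apply: ler_wpM2l; lra].
  have hd : M * (rs i * f (rs i)) <= M / (M + 1) * powR (rs i / 2) p.
    rewrite -mulrA; apply: ler_wpM2l; first lra.
    apply: le_trans; first (apply: ler_wpM2l h3; lra).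
    rewrite le_eqVlt; apply/orP; left; apply/eqP; field; apply/andP; split; apply: lt0r_neq0; lra.
  have he : M / (M + 1) < 1 by rewrite ltr_pdivrMr; lra.
  have : M / (M + 1) * powR (rs i / 2) p < powR (rs i / 2) p.
    by rewrite gtr_pMl.
  move=> h4; apply: le_lt_trans hc _; apply: le_lt_trans hd _.
  exact: lt_le_trans h4 hb.
exists rs; split; first by move=> k; rewrite rpos /=; elim: k => [|k IH] /=; [lra|exact: le_trans (rdec k) IH].
move=> i j; case: ltngtP => // hij _.
  exact: key.
by rewrite (mulrC (rs i)) distrC; exact: key.
Qed.


Lemma ball1 n (p : R) (hp : 1 <= p) (c1 : 'rV[R]_n) (r1 : R) (c2 : 'rV[R]_n) (r2 : R) :
     0 < r1 -> 0 < r2 -> forall Delta : R, 0 < Delta ->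
     exists r0 : R, 0 < r0 /\
       forall (c' : 'rV[R]_n) (r' : R), 0 < r' ->
         eball c' r' `<=` eball c2 r2 -> r' <= r0 ->
         ddep_ball p c1 r1 c' r' > ddep_ball p c1 r1 c2 r2 + Delta.
Proof.
move=> h1 h2 D hD.
set K := ddep_ball p c1 r1 c2 r2.
set a := powR (r1/2) p.
have ha : 0 < a by apply: powR_gt0; lra.
set L : R := `|K| + D + 1.
have hL : K + D < L by have := ler_norm K; rewrite /L; lra.
have hL0 : 0 < L by have := normr_ge0 K; rewrite /L; lra.
exists (Num.min (r1/2) (a/(r1*L))); split.
  by rewrite lt_min; apply/andP; split; [lra | apply: divr_gt0 => //; apply: mulr_gt0].
move=> c' r' hr' _; rewrite le_min => /andP[hle1 hle2].
rewrite /ddep_ball ltr_pdivlMr; last by apply: mulr_gt0.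
have hP := powR_ge0 (pnorm p (c1 - c')) p.
have hQ : a <= powR `|r1 - r'| p.
  have hn : r1 / 2 <= `|r1 - r'| by rewrite ger0_norm; lra.
  apply: ge0_ler_powR => //; [lra | rewrite nnegrE; lra].
have e1 : (K + D) * (r1 * r') < L * (r1 * r') by rewrite ltr_pM2r // mulr_gt0.
have e2 : L * (r1 * r') <= a.
  move: hle2; rewrite ler_pdivlMr ?mulr_gt0 //.
  by have -> : L * (r1 * r') = r' * (r1 * L) by ring.
lra.
Qed.

Lemma ball2 n (p : R) (hp : 1 <= p) (c : 'rV[R]_n) (r : R) : 0 < r ->
     forall (N : nat), (0 < N)%N -> forall M : R, 0 < M ->
     exists (cs : 'I_N -> 'rV[R]_n) (rs : 'I_N -> R),
       (forall i, 0 < rs i) /\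
       (forall i, eball (cs i) (rs i) `<=` eball c r) /\
       (forall i j, i != j -> ddep_ball p (cs i) (rs i) (cs j) (rs j) > M).
Proof.
move=> hr N hN M hM.
have [rs [hpos hd]] := radii p M r hp hM hr.
exists (fun=> c), (fun i : 'I_N => rs i); split; first by move=> i; case/andP: (hpos i).
split.
  move=> i x; rewrite /eball /= => hx; case/andP: (hpos i) => _ h; exact: le_trans hx h.
move=> i j hij; rewrite /ddep_ball pnorm0 // add0r ltr_pdivlMr.
  exact: hd.
by case/andP: (hpos i); case/andP: (hpos j) => *; apply: mulr_gt0.
Qed.


Lemma box1 n (p : R) (hn : (1 <= n)%N) (hp : 1 <= p) (c1 o1 c2 o2 : 'rV[R]_n) :
     posvec o1 -> posvec o2 -> forall Delta : R, 0 < Delta ->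
     exists o0 : 'rV[R]_n, posvec o0 /\
       forall (c' o' : 'rV[R]_n), posvec o' ->
         box c' o' `<=` box c2 o2 -> vle o' o0 ->
         ddep_box p c1 o1 c' o' > ddep_box p c1 o1 c2 o2 + Delta.
Proof.
move=> ho1 ho2 D hD.
pose i0 : 'I_n := Ordinal hn.
set K := ddep_box p c1 o1 c2 o2.
set a := powR (o1 ord0 i0 / 2) p.
have hoi := ho1 i0.
have ha : 0 < a by apply: powR_gt0; lra.
set E1 := enorm o1.
have hE1 : 0 < E1 := enorm_gt0 n o1 i0 ho1.
set L : R := `|K| + D + 1.
have hL : K + D < L by have := ler_norm K; rewrite /L; lra.
have hL0 : 0 < L by have := normr_ge0 K; rewrite /L; lra.
set t := Num.min (1/2) (a/(E1*E1*L)).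
have ht : 0 < t.
  by rewrite lt_min; apply/andP; split; [lra | apply: divr_gt0 => //; rewrite !mulr_gt0].
have ht1 : t <= 1/2 by rewrite ge_min lexx.
have ht2 : t <= a/(E1*E1*L) by rewrite ge_min lexx orbT.
exists (t *: o1); split.
  by move=> i; rewrite mxE mulr_gt0.
move=> c' o' ho' _ hle.
set E' := enorm o'.
have hE' : 0 < E' := enorm_gt0 n o' i0 ho'.
have hE'le : E' <= t * E1.
  have -> : t * E1 = enorm (t *: o1) by rewrite enormZ ger0_norm // ltW.
  rewrite /E' /enorm; apply: ler_wsqrtr; apply: ler_sum => i _.
  rewrite ler_sqr ?nnegrE; first exact: hle i.
    exact: ltW (ho' i).
  by rewrite mxE; apply: mulr_ge0; apply: ltW => //; exact: ho1.
rewrite /ddep_box -/E1 -/E' ltr_pdivlMr; last by apply: mulr_gt0.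
have hP := powR_ge0 (pnorm p (c1 - c')) p.
have hQ : a <= powR (pnorm p (o1 - o')) p.
  rewrite pnormE // (bigD1 i0) //=.
  have hs : 0 <= \sum_(i < n | i != i0) powR `|(o1 - o') ord0 i| p.
    by apply: sumr_ge0 => i _; exact: powR_ge0.
  suff : a <= powR `|(o1 - o') ord0 i0| p by lra.
  have hl := hle i0; rewrite mxE in hl.
  have hn' : o1 ord0 i0 / 2 <= `|(o1 - o') ord0 i0|.
    have hti : t * o1 ord0 i0 <= 1/2 * o1 ord0 i0 by rewrite ler_pM2r.
    rewrite !mxE ger0_norm; lra.
  apply: ge0_ler_powR => //; [lra | rewrite nnegrE; lra].
have e1 : (K + D) * (E1 * E') < L * (E1 * E') by rewrite ltr_pM2r // mulr_gt0.
have e2 : L * (E1 * E') <= L * (E1 * (t * E1)).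
  exact: (ler_wpM2l (ltW hL0) (ler_wpM2l (ltW hE1) hE'le)).
have e3 : L * (E1 * (t * E1)) <= a.
  move: ht2; rewrite ler_pdivlMr ?mulr_gt0 //.
  by have -> : L * (E1 * (t * E1)) = t * (E1 * E1 * L) by ring.
have e4 : pnorm p (o1 - o') `^ p <= pnorm p (c1 - c') `^ p + pnorm p (o1 - o') `^ p.
  exact: (ler_wpDl hP (lexx _)).
exact: (lt_le_trans e1 (le_trans e2 (le_trans e3 (le_trans hQ e4)))).
Qed.

Lemma ddep_box_same n (p : R) (hp : 1 <= p) (c o1 o2 : 'rV[R]_n) :
  ddep_box p c o1 c o2 = powR (pnorm p (o1 - o2)) p / (enorm o1 * enorm o2).
Proof.
rewrite /ddep_box; congr (_ / _).
exact: (etrans (congr1 (fun z => z + _) (pnorm0 n p c hp)) (add0r _)).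
Qed.

Lemma pnormZB n (p : R) (hp : 1 <= p) (a b : R) (o : 'rV[R]_n) : posvec o ->
  powR (pnorm p (a *: o - b *: o)) p = powR `|a - b| p * \sum_(k < n) powR (o ord0 k) p.
Proof.
move=> ho; rewrite pnormE // mulr_sumr; apply: eq_bigr => k _.
by rewrite !mxE -mulrBl normrM powRM ?normr_ge0 // (ger0_norm (ltW (ho k))).
Qed.

Lemma box2 n (p : R) (hn : (1 <= n)%N) (hp : 1 <= p) (c o : 'rV[R]_n) : posvec o ->
     forall (N : nat), (0 < N)%N -> forall M : R, 0 < M ->
     exists (cs os : 'I_N -> 'rV[R]_n),
       (forall i, posvec (os i)) /\
       (forall i, box (cs i) (os i) `<=` box c o) /\
       (forall i j, i != j -> ddep_box p (cs i) (os i) (cs j) (os j) > M).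
Proof.
move=> ho N hN M hM.
pose i0 : 'I_n := Ordinal hn.
set S := \sum_(k < n) powR (o ord0 k) p.
have hS : 0 < S.
  rewrite /S (bigD1 i0) //=.
  have hs : 0 <= \sum_(i < n | i != i0) powR (o ord0 i) p.
    by apply: sumr_ge0 => i _; exact: powR_ge0.
  have : 0 < powR (o ord0 i0) p by apply: powR_gt0; exact: ho.
  lra.
set E := enorm o.
have hE : 0 < E := enorm_gt0 n o i0 ho.
have hM' : 0 < M * (E * E) / S by apply: divr_gt0 => //; apply: mulr_gt0 => //; apply: mulr_gt0.
have [rs [hpos hd]] := radii p (M * (E * E) / S) 1 hp hM' ltr01.
exists (fun=> c), (fun i : 'I_N => rs i *: o); split.
  by move=> i k; rewrite mxE; case/andP: (hpos i) => h _; rewrite mulr_gt0.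
split.
  move=> i x; rewrite /box /= => hx k; have := hx k; rewrite mxE.
  case/andP: (hpos i) => h1 h2.
  have hok := ho k.
  have := ler_piMl (ltW hok) h2.
  have := mulr_ge0 (ltW h1) (ltW hok).
  move=> ? ? /andP[? ?]; apply/andP; split; lra.
move=> i j hij; rewrite ddep_box_same // pnormZB // -/S.
case/andP: (hpos i) => hi _; case/andP: (hpos j) => hj _.
rewrite !enormZ (ger0_norm (ltW hi)) (ger0_norm (ltW hj)) -/E.
rewrite ltr_pdivlMr; last by rewrite !mulr_gt0.
rewrite -ltr_pdivrMr //.
have -> : M * (rs i * E * (rs j * E)) / S = M * (E * E) / S * (rs i * rs j) by ring.
exact: hd.
Qed.

End H.

Theorem theorem1 (R : realType) (n : nat) (p : R) (hn : (1 <= n)%N) (hp : 1 <= p) :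
  (* (1) for balls *)
  (forall (c1 : 'rV[R]_n) (r1 : R) (c2 : 'rV[R]_n) (r2 : R),
     0 < r1 -> 0 < r2 -> forall Delta : R, 0 < Delta ->
     exists r0 : R, 0 < r0 /\
       forall (c' : 'rV[R]_n) (r' : R), 0 < r' ->
         eball c' r' `<=` eball c2 r2 -> r' <= r0 ->
         ddep_ball p c1 r1 c' r' > ddep_ball p c1 r1 c2 r2 + Delta) /\
  (* (2) for balls *)
  (forall (c : 'rV[R]_n) (r : R), 0 < r ->
     forall (N : nat), (0 < N)%N -> forall M : R, 0 < M ->
     exists (cs : 'I_N -> 'rV[R]_n) (rs : 'I_N -> R),
       (forall i, 0 < rs i) /\
       (forall i, eball (cs i) (rs i) `<=` eball c r) /\
       (forall i j, i != j -> ddep_ball p (cs i) (rs i) (cs j) (rs j) > M)) /\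
  (* (1) for boxes *)
  (forall (c1 o1 c2 o2 : 'rV[R]_n),
     posvec o1 -> posvec o2 -> forall Delta : R, 0 < Delta ->
     exists o0 : 'rV[R]_n, posvec o0 /\
       forall (c' o' : 'rV[R]_n), posvec o' ->
         box c' o' `<=` box c2 o2 -> vle o' o0 ->
         ddep_box p c1 o1 c' o' > ddep_box p c1 o1 c2 o2 + Delta) /\
  (* (2) for boxes *)
  (forall (c o : 'rV[R]_n), posvec o ->
     forall (N : nat), (0 < N)%N -> forall M : R, 0 < M ->
     exists (cs os : 'I_N -> 'rV[R]_n),
       (forall i, posvec (os i)) /\
       (forall i, box (cs i) (os i) `<=` box c o) /\
       (forall i j, i != j -> ddep_box p (cs i) (os i) (cs j) (os j) > M)).
Proof.
split; first by move=> c1 r1 c2 r2; exact: ball1.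
split; first by move=> c r; exact: ball2.
split; first by move=> c1 o1 c2 o2; exact: box1.
by move=> c o; exact: box2.
Qed.
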